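(* For all $n\ge1$, $a_{\{0112,0120\}}(n)=2^{n-1}+\binom{n+1}{4}$.
   Context: An ascent in an integer sequence $s_1\cdots s_m$ is an index $j$ with $s_j<s_{j+1}$; $\mathrm{asc}$ denotes the number of ascents. An ascent sequence is a sequence $x_1\cdots x_n$ of nonnegative integers with $x_1=0$ and $x_i\le 1+\mathrm{asc}(x_1\cdots x_{i-1})$ for all $i\ge2$. The reduction $\mathrm{red}(w)$ of an integer sequence $w$ replaces the $i$-th smallest distinct letter of $w$ by $i-1$; a pattern is a reduced sequence. A sequence $x$ contains a pattern $p=p_1\cdots p_k$ if there are indices $i_1<\cdots<i_k$ with $\mathrm{red}(x_{i_1}\cdots x_{i_k})=p$; otherwise $x$ avoids $p$. For a finite set $P$ of patterns, $a_P(n)$ denotes the number of ascent sequences of length $n$ avoiding every pattern in $P$. *)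

(* Defs.v *)
From mathcomp Require Import all_boot.
Set Implicit Arguments. Unset Strict Implicit. Unset Printing Implicit Defensive.

Definition asc (s : seq nat) : nat :=
  count (fun j => nth 0 s j < nth 0 s j.+1) (iota 0 (size s).-1).

Definition is_ascent_seq (x : seq nat) : bool :=
  (nth 0 x 0 == 0) &&
  all (fun i => nth 0 x i <= (asc (take i x)).+1) (iota 1 (size x).-1).

Definition red (w : seq nat) : seq nat :=
  map (fun a => index a (sort leq (undup w))) w.

Definition contains (x p : seq nat) : bool :=
  [exists m : (size x).-tuple bool, red (mask m x) == p].

Definition avoids (x p : seq nat) : bool := ~~ contains x p.

Definition avoiding_ascent_seq (P : seq (seq nat)) (n : nat) (x : seq nat) : bool :=
  [&& size x == n, is_ascent_seq x & all (avoids x) P].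

(* a_P(n): the number of such sequences. Every entry of an ascent sequence
   of length n is < n (since asc < n), so the set is enumerated exactly
   by the n-tuples over 'I_n. *)
Definition a_P (P : seq (seq nat)) (n : nat) : nat :=
  #|[set t : n.-tuple 'I_n |
      avoiding_ascent_seq P n (map (@nat_of_ord n) (val t)) ]|.

Example ex_red : red [:: 5; 2; 7; 2] = [:: 1; 0; 2; 0]. Proof. by vm_compute. Qed.
Example ex_asc1 : is_ascent_seq [:: 0; 1; 0; 2; 3; 1] = true. Proof. by vm_compute. Qed.
Example ex_asc2 : is_ascent_seq [:: 0; 2] = false. Proof. by vm_compute. Qed.

(* Main.v *)
Require Import Defs.
From mathcomp Require Import all_boot zify.
Set Implicit Arguments. Unset Strict Implicit. Unset Printing Implicit Defensive.

Lemma size_red s : size (red s) = size s.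
Proof. by rewrite /red size_map. Qed.

Lemma red_nth s i j : i < size s -> j < size s ->
  (nth 0 (red s) i < nth 0 (red s) j -> nth 0 s i < nth 0 s j) /\
  (nth 0 (red s) i = nth 0 (red s) j -> nth 0 s i = nth 0 s j).
Proof.
move=> hi hj; rewrite /red !(nth_map 0) //.
set t := sort leq (undup s).
have st : sorted ltn t.
  by rewrite ltn_sorted_uniq_leq sort_uniq undup_uniq sort_sorted //; exact: leq_total.
have mi : nth 0 s i \in t by rewrite mem_sort mem_undup mem_nth.
have mj : nth 0 s j \in t by rewrite mem_sort mem_undup mem_nth.
split.
  move=> h; rewrite -(nth_index 0 mi) -(nth_index 0 mj).
  apply: (sorted_ltn_nth ltn_trans 0 st) => //; by rewrite inE index_mem.
by move=> h; rewrite -(nth_index 0 mi) -(nth_index 0 mj) h.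
Qed.

Lemma red_0112 a b c : a < b -> b < c -> red [:: a; b; b; c] = [:: 0; 1; 1; 2].
Proof.
move=> ab bc.
have ac : a < c by apply: ltn_trans ab bc.
rewrite /red /= !inE (ltn_eqF ab) (ltn_eqF ac) (ltn_eqF bc) eqxx /=.
rewrite (@sorted_sort _ leq leq_trans [:: a; b; c]) /=; last by rewrite (ltnW ab) (ltnW bc).
by rewrite /= !eqxx ?(ltn_eqF ab) ?(ltn_eqF ac) ?(ltn_eqF bc) ?(gtn_eqF ab) ?(gtn_eqF ac) ?(gtn_eqF bc).
Qed.

Lemma red_0120 a b c : a < b -> b < c -> red [:: a; b; c; a] = [:: 0; 1; 2; 0].
Proof.
move=> ab bc.
have ac : a < c by apply: ltn_trans ab bc.
rewrite /red /= !inE (ltn_eqF ab) (ltn_eqF ac) (ltn_eqF bc) eqxx /=.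
rewrite (gtn_eqF ab) (gtn_eqF ac).
have -> : sort leq [:: b; c; a] = [:: a; b; c].
  apply: (sorted_eq leq_trans anti_leq); first exact: (sort_sorted leq_total).
    by rewrite /= (ltnW ab) (ltnW bc).
  rewrite perm_sort; apply/permPl => z; exact: (perm_rot 1 [:: a; b; c]).
by rewrite /= !eqxx ?(ltn_eqF ab) ?(ltn_eqF ac) ?(ltn_eqF bc) ?(gtn_eqF ab) ?(gtn_eqF ac) ?(gtn_eqF bc).
Qed.

Lemma mask_nth_iota (m : bitseq) (x : seq nat) :
  mask m x = map (nth 0 x) (mask m (iota 0 (size x))).
Proof. by rewrite map_mask -/(mkseq _ _) mkseq_nth. Qed.

Lemma containsP4 x p : size p = 4 ->
  reflect (exists i j k l, [/\ i < j, j < k, k < l, l < size x &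
     red [:: nth 0 x i; nth 0 x j; nth 0 x k; nth 0 x l] = p]) (contains x p).
Proof.
move=> sp; apply: (iffP existsP).
  case=> m /eqP h.
  have st : sorted ltn (mask m (iota 0 (size x))) by apply: sorted_mask ltn_trans _ _ (iota_ltn_sorted 0 _).
  have mem : forall t, t \in mask m (iota 0 (size x)) -> t < size x.
    by move=> t /mem_mask; rewrite mem_iota.
  move: h st mem; rewrite mask_nth_iota.
  case: (mask m (iota 0 (size x))) => [|i [|j [|k [|l [|z s]]]]] h; 
    try by move: (congr1 size h); rewrite size_red size_map sp.
  move=> /= /and4P [ij jk kl _] mem; exists i, j, k, l; split => //.
  by apply: mem; rewrite !inE eqxx !orbT.
case=> i [j [k [l [ij jk kl lx h]]]].
set I := [:: i; j; k; l].
set m := [seq t \in I | t <- iota 0 (size x)].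
have sm : size m == size x by rewrite size_map size_iota.
exists (Tuple sm); apply/eqP => /=.
rewrite mask_nth_iota /m -filter_mask.
have -> : [seq t <- iota 0 (size x) | t \in I] = I.
  apply: (irr_sorted_eq ltn_trans ltnn).
  - apply: (sorted_filter ltn_trans); exact: iota_ltn_sorted.
  - by rewrite /= ij jk kl.
  move=> t; rewrite mem_filter mem_iota /= !inE.
  case: (boolP (_ || _)) => //= /or4P [] /eqP ->; lia.
by rewrite -h.
Qed.

Definition C0112 x := exists i j k l, [/\ i < j, j < k, k < l, l < size x &
  [/\ nth 0 x i < nth 0 x j, nth 0 x j = nth 0 x k & nth 0 x k < nth 0 x l]].
Definition C0120 x := exists i j k l, [/\ i < j, j < k, k < l, l < size x &
  [/\ nth 0 x i < nth 0 x j, nth 0 x j < nth 0 x k & nth 0 x l = nth 0 x i]].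

Lemma c0112P x : contains x [:: 0; 1; 1; 2] <-> C0112 x.
Proof.
split.
  move/containsP4 => /(_ erefl) [i [j [k [l [ij jk kl lx h]]]]].
  exists i, j, k, l; split => //.
  set s := [:: _; _; _; _] in h.
  have r01 := red_nth (i:=0) (j:=1) (s:=s) erefl erefl.
  have r12 := red_nth (i:=1) (j:=2) (s:=s) erefl erefl.
  have r23 := red_nth (i:=2) (j:=3) (s:=s) erefl erefl.
  rewrite h /= in r01 r12 r23.
  split; [exact: r01.1 | exact: r12.2 | exact: r23.1].
case=> i [j [k [l [ij jk kl lx [h1 h2 h3]]]]].
apply/containsP4 => //; exists i, j, k, l; split => //.
by rewrite -h2 red_0112 // h2.
Qed.

Lemma c0120P x : contains x [:: 0; 1; 2; 0] <-> C0120 x.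
Proof.
split.
  move/containsP4 => /(_ erefl) [i [j [k [l [ij jk kl lx h]]]]].
  exists i, j, k, l; split => //.
  set s := [:: _; _; _; _] in h.
  have r01 := red_nth (i:=0) (j:=1) (s:=s) erefl erefl.
  have r12 := red_nth (i:=1) (j:=2) (s:=s) erefl erefl.
  have r30 := red_nth (i:=3) (j:=0) (s:=s) erefl erefl.
  rewrite h /= in r01 r12 r30.
  split; [exact: r01.1 | exact: r12.1 | exact: r30.2].
case=> i [j [k [l [ij jk kl lx [h1 h2 h3]]]]].
apply/containsP4 => //; exists i, j, k, l; split => //.
by rewrite h3 red_0120.
Qed.

Definition ascf (f : nat -> nat) i := count (fun j => f j < f j.+1) (iota 0 i.-1).

Lemma asc_take x i : i <= size x -> asc (take i x) = ascf (nth 0 x) i.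
Proof.
move=> hi; rewrite /asc /ascf size_take.
have -> : (if i < size x then i else size x) = i by case: ltnP => //; lia.
apply: eq_in_count => t; rewrite mem_iota => /andP [_ ht].
rewrite !nth_take //; lia.
Qed.

Lemma ascf_eq f g i : (forall t, t < i -> f t = g t) -> ascf f i = ascf g i.
Proof.
move=> h; apply: eq_in_count => t; rewrite mem_iota => /andP [_ ht].
rewrite !h //; lia.
Qed.

Lemma ascfS f i : ascf f i.+2 = ascf f i.+1 + (f i < f i.+1).
Proof. rewrite /ascf (_ : i.+2.-1 = i + 1); last by rewrite addn1. by rewrite iotaD count_cat /= addn0. Qed.

Lemma ascf0 f : ascf f 0 = 0. Proof. by []. Qed.
Lemma ascf1 f : ascf f 1 = 0. Proof. by []. Qed.

Lemma is_ascP x : is_ascent_seq x <->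
  nth 0 x 0 = 0 /\ forall i, 0 < i < size x -> nth 0 x i <= (ascf (nth 0 x) i).+1.
Proof.
rewrite /is_ascent_seq; split.
  case/andP => /eqP h0 /allP h; split => // i hi.
  have := h i; rewrite mem_iota asc_take; last lia.
  move=> /(_ _) -> //; lia.
case=> h0 h; rewrite h0 eqxx /=; apply/allP => i; rewrite mem_iota => hi.
rewrite asc_take; [apply: h|]; lia.
Qed.

Definition F a b c j i :=
  if i <= a then 0 else if i == a.+1 then 1 else if i <= a + b + 1 then 0
  else if i <= a + b + c + 2 then i - (a + b) else if i <= a + b + c + j + 2 then c.+2
  else c.+1.

Definition g a b c i := (a.+1 < i) + (minn i (a + b + c + 3) - (a + b + 2)).

Lemma ascfF a b c j i : ascf (F a b c j) i = g a b c i.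
Proof.
elim: i => [|i IH]; first by rewrite ascf0 /g; lia.
case: i IH => [|i] IH; first by rewrite ascf1 /g; lia.
rewrite ascfS IH /g /F.
repeat (case: ifP => ?); lia.
Qed.

Lemma F_0112 a b c j i1 i2 i3 i4 : i1 < i2 -> i2 < i3 -> i3 < i4 ->
  F a b c j i1 < F a b c j i2 -> F a b c j i2 = F a b c j i3 -> F a b c j i3 < F a b c j i4 -> False.
Proof.
rewrite /F => h1 h2 h3.
repeat (case: ifP => ?; try lia).
Qed.

Lemma F_0120 a b c j i1 i2 i3 i4 : i1 < i2 -> i2 < i3 -> i3 < i4 ->
  F a b c j i1 < F a b c j i2 -> F a b c j i2 < F a b c j i3 -> F a b c j i4 = F a b c j i1 -> False.
Proof.
rewrite /F => h1 h2 h3.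
repeat (case: ifP => ?; try lia).
Qed.

Lemma F_asc a b c j i : 0 < i -> F a b c j i <= (g a b c i).+1.
Proof. rewrite /F /g => h; repeat (case: ifP => ?; try lia). Qed.

Lemma structure x : is_ascent_seq x -> ~ C0112 x -> ~ C0120 x ->
  all (fun v => v <= 1) x \/
  exists a b c j l, size x = a + b + c + j + l + 3 /\
    forall i, i < size x -> nth 0 x i = F a b c j i.
Proof.
move=> /is_ascP [h0 hasc] n12 n20.
case: (boolP (all (fun v => v <= 1) x)) => [h|hall]; [by left | right].
set N := size x.
have exP : exists t, (t < N) && (2 <= nth 0 x t).
  move/allPn: hall => [v vx hv]; exists (index v x).
  by rewrite index_mem vx nth_index //; lia.
case: (ex_minnP exP) => p /andP [pN xp2] pmin.
have lt1 : forall t, t < p -> nth 0 x t <= 1.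
  move=> t tp; case: (leqP (nth 0 x t) 1) => // h.
  have := pmin t; rewrite h andbT; move=> /(_ (ltn_trans tp pN)); lia.
have p0 : 0 < p by case: p pN xp2 {pmin lt1} => //; rewrite h0.
have exq : exists q, q < p /\ nth 0 x q = 1.
  case: (boolP (has (fun t => nth 0 x t == 1) (iota 0 p))) => [/hasP [q]|hn].
    by rewrite mem_iota => qp /eqP xq; exists q; split.
  have z : forall t, t < p -> nth 0 x t = 0.
    move=> t tp; move/hasPn: hn => /(_ t); rewrite mem_iota /= => /(_ tp).
    have := lt1 t tp; lia.
  have : ascf (nth 0 x) p = 0.
    rewrite (@ascf_eq _ (fun _ => 0)) // /ascf.
    by elim: (iota 0 p.-1).
  have := hasc p; rewrite p0 pN => /(_ isT); lia.
case: exq => q [qp xq].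
have q0 : 0 < q by case: q qp xq => //; rewrite h0.
have qu : forall t, t < p -> nth 0 x t = 1 -> t = q.
  move=> t tp xt; case: (ltngtP t q) => // tq.
  - case: n12; exists 0, t, q, p; split => //; try lia.
      by case: t tp xt tq => //; rewrite h0.
    by rewrite h0 xt xq; split => //; lia.
  - case: n12; exists 0, q, t, p; split => //; try lia.
    by rewrite h0 xt xq; split => //; lia.
have xlow : forall t, t < p -> nth 0 x t = if t == q then 1 else 0.
  move=> t tp; case: eqP => [->//|tq].
  have := lt1 t tp; have := qu t tp; lia.
have xp : nth 0 x p = 2.
  have : ascf (nth 0 x) p = 1.
    rewrite (@ascf_eq _ (F q.-1 (p - q - 1) 0 0)).
      rewrite ascfF /g; lia.
    move=> t tp; rewrite xlow // /F.
    repeat (case: ifP => ?; try lia).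
  have := hasc p; rewrite p0 pN => /(_ isT); lia.
have pos : forall t, p < t < N -> 1 <= nth 0 x t.
  move=> t /andP [pt tN]; case: (leqP 1 (nth 0 x t)) => // h.
  case: n20; exists 0, q, p, t; split => //; try lia.
  by rewrite h0 xq xp; split => //; lia.
pose P r := [&& p <= r, r < N & all (fun t => nth 0 x t == t - p + 2) (iota p (r - p + 1))].
have exR : exists r, P r.
  exists p; rewrite /P leqnn pN /= subnn /= xp; lia.
have ubR : forall r, P r -> r <= N by move=> r /and3P [_ /ltnW -> _].
case: (ex_maxnP exR ubR) => r /and3P [pr rN /allP hr] rmax.
have hrun : forall t, p <= t <= r -> nth 0 x t = t - p + 2.
  move=> t ht; apply/eqP/hr; rewrite mem_iota; lia.
pose K := r - p + 2.
pose e v := if v == 1 then q else p + v - 2.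
have he : forall v, 1 <= v <= K -> [/\ nth 0 x (e v) = v, 0 < e v & e v <= r].
  move=> v hv; rewrite /e; case: eqP => [->|v1]; first by split => //; lia.
  rewrite hrun; [split|]; lia.
have hemono : forall v w, 1 <= v -> v < w -> e v < e w.
  move=> v w hv vw; rewrite /e; do 2 case: eqP; lia.
have agree : forall m i, r < m -> (forall t, r < t < i -> nth 0 x t = if t < m then K else K - 1) ->
    forall t, t < i -> nth 0 x t = F q.-1 (p - q - 1) (r - p) (m - r - 1) t.
  move=> m i rm ht t ti; case: (ltnP t p) => tp.
    rewrite xlow // /F; repeat (case: ifP => ?; try lia).
  case: (leqP t r) => tr.
    rewrite hrun; last lia.
    rewrite /F; repeat (case: ifP => ?; try lia).
  rewrite ht; last lia.
  rewrite /K /F; repeat (case: ifP => ?; try lia).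
have inv : forall d, r.+1 + d <= N -> exists m, r < m <= r.+1 + d /\
    forall t, r < t < r.+1 + d -> nth 0 x t = if t < m then K else K - 1.
  elim=> [|d IH] hd.
    by exists r.+1; split; [lia | move=> t; lia].
  have [m [hm ht]] := IH (ltac:(lia)).
  rewrite addnS in hd *.
  move: hd ht hm; set i := r.+1 + d => hd ht hm.
  have rm : r < m by case/andP: hm.
  have ai : ascf (nth 0 x) i = K.
    rewrite (ascf_eq (agree m i rm ht)) ascfF /g /K; lia.
  have ub : nth 0 x i <= K.+1.
    have := hasc i; rewrite ai; apply; lia.
  have lb : 1 <= nth 0 x i by apply: pos; lia.
  case: (ltngtP (nth 0 x i) (K - 1)) => [lt|gt|eq].
  - case: n20; exists (e (nth 0 x i)), (e (nth 0 x i).+1), (e (nth 0 x i).+2), i.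
    have [h1 h1' h1''] := he (nth 0 x i) (ltac:(lia)).
    have [h2 h2' h2''] := he (nth 0 x i).+1 (ltac:(lia)).
    have [h3 h3' h3''] := he (nth 0 x i).+2 (ltac:(lia)).
    split; try (apply: hemono; lia); try lia.
    rewrite h1 h2 h3; split => //; lia.
  - have [K1|KK] : nth 0 x i = K \/ nth 0 x i = K.+1 by lia.
    + case: (ltngtP m i) => [mi|im|mi].
      * case: n12; exists 0, (e (K - 1)), m, i.
        have [h1 h1' h1''] := he (K - 1) (ltac:(lia)).
        split; try lia.
        rewrite h0 h1 ht; last lia.
        rewrite ltnn K1; split => //; lia.
      * lia.
      * exists i.+1; split; first lia.
        move=> t ht'; case: (ltngtP t i) => [ti|ti|->].
        -- rewrite ht; last lia.
           by rewrite mi ti; case: ifP => //; lia.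
        -- lia.
        -- by rewrite K1 ltnSn.
    + case: (posnP d) => [d0|dpos].
      * have : P r.+1.
          rewrite /P; apply/and3P; split; try lia.
          apply/allP => t; rewrite mem_iota => ht'.
          case: (leqP t r) => tr; first by rewrite hrun //; lia.
          have -> : t = i by rewrite /i d0; lia.
          rewrite KK /K; apply/eqP; lia.
        move/rmax; lia.
      * have := ht r.+1 (ltac:(lia)).
        case: ifP => _ hr1.
        -- case: n12; exists 0, r, r.+1, i; split; try lia.
           rewrite h0 hr1 hrun; last lia.
           rewrite KK /K; split => //; lia.
        -- case: n12; exists 0, (e (K - 1)), r.+1, i.
           have [h1 h1' h1''] := he (K - 1) (ltac:(lia)).
           split; try lia.
           rewrite h0 h1 hr1 KK; split => //; lia.
  - exists m; split; first lia.
    move=> t ht'; case: (ltngtP t i) => [ti|ti|->].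
    + by rewrite ht //; lia.
    + lia.
    + rewrite eq; case: ifP => // ?; lia.
have [m [hm ht]] := inv (N - r.+1) (ltac:(lia)).
have rm : r < m by case/andP: hm.
exists q.-1, (p - q - 1), (r - p), (m - r - 1), (N - m); split; first lia.
apply: (agree m N rm) => t ht'; apply: ht; lia.
Qed.

Lemma map_val_pmap n (x : seq nat) : all (fun v => v < n) x ->
  map val (pmap (insub : nat -> option 'I_n) x) = x.
Proof.
elim: x => //= v x IH /andP [vn hx].
by case: insubP => [u _ <-|]; [rewrite /= IH | rewrite vn].
Qed.

Lemma card_listP n (Q : seq nat -> bool) (L : seq (seq nat)) :
  uniq L -> (forall x, Q x = (x \in L)) ->
  (forall x, Q x -> size x == n) -> (forall x, Q x -> all (fun v => v < n) x) ->
  #|[set t : n.-tuple 'I_n | Q (map val (val t))]| = size L.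
Proof.
move=> uL QL Qs Qa.
rewrite cardE.
set E := [seq map val (val t) | t <- enum [set t : n.-tuple 'I_n | Q (map val (val t))]].
have uE : uniq E.
  rewrite map_inj_uniq ?enum_uniq // => t1 t2 h.
  by apply: val_inj; apply: (inj_map val_inj).
have -> : size (enum [set t : n.-tuple 'I_n | Q (map val (val t))]) = size E by rewrite size_map.
apply: perm_size; apply: uniq_perm => // x.
rewrite -QL; apply/mapP/idP.
  by case=> t; rewrite mem_enum inE => h ->.
move=> qx.
have sz : size (pmap (insub : nat -> option 'I_n) x) == n.
  by rewrite size_pmap_sub; move: (Qa x qx); rewrite all_count => /eqP ->; exact: Qs.
exists (Tuple sz); last by rewrite /= map_val_pmap // Qa.
by rewrite mem_enum inE /= map_val_pmap // Qa.
Qed.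

Fixpoint bin k : seq (seq nat) :=
  if k is k'.+1 then map (cons 0) (bin k') ++ map (cons 1) (bin k') else [:: [::]].

Lemma size_bin k : size (bin k) = 2 ^ k.
Proof. by elim: k => //= k IH; rewrite size_cat !size_map IH expnS mul2n addnn. Qed.

Lemma mem_bin k s : (s \in bin k) = (size s == k) && all (fun v => v <= 1) s.
Proof.
elim: k s => [|k IH] [|v s] //=.
  by rewrite mem_cat; apply/negbTE; rewrite negb_or; apply/andP; split; apply/mapP => [[?]].
have i0 : injective (cons 0) by move=> ? ? [].
have i1 : injective (cons 1) by move=> ? ? [].
have nm : forall a b (s : seq nat) t, a != b -> (a :: s \in [seq b :: i | i <- t]) = false.
  by move=> a b s' t ab; apply/mapP => [[u _ [e _]]]; rewrite e eqxx in ab.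
rewrite mem_cat eqSS; case: v => [|[|v]].
- by rewrite (mem_map i0) IH (nm 0 1) // orbF.
- by rewrite (mem_map i1) IH (nm 1 0).
- by rewrite !nm //= andbF.
Qed.

Lemma nohas01 (A B : seq (seq nat)) : ~~ has (mem (map (cons 0) A)) (map (cons 1) B).
Proof. elim: B => //= b B IH; rewrite negb_or IH andbT; by apply/negP => /mapP [u _ /eqP]. Qed.

Lemma uniq_bin k : uniq (bin k).
Proof.
elim: k => //= k IH; rewrite cat_uniq !map_inj_uniq ?IH //; try by move=> ? ? [].
by rewrite /= nohas01.
Qed.

Fixpoint comps k s : seq (seq nat) :=
  if k is k'.+1 then [seq i :: c | i <- iota 0 s.+1, c <- comps k' (s - i)]
  else (if s == 0 then [:: [::]] else [::]).

Lemma mem_comps k s c : (c \in comps k s) = (size c == k) && (sumn c == s).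
Proof.
elim: k s c => [|k IH] s c.
  by case: s => [|s]; case: c => //= *; rewrite ?inE.
apply/idP/idP.
  case/allpairsPdep=> i [d [hi hd ->]] /=.
  rewrite IH in hd; case/andP: hd => /eqP -> /eqP ->.
  rewrite mem_iota in hi; rewrite eqxx /=; apply/eqP; lia.
case: c => [|i d]; first by case/andP.
move=> /andP [/eqP sd /eqP su]; rewrite /= in sd su.
apply/allpairsPdep; exists i, d; split.
- rewrite mem_iota; lia.
- rewrite IH; apply/andP; split; apply/eqP; [by case: sd | by rewrite -su addKn].
- by [].
Qed.

Lemma uniq_comps k s : uniq (comps k s).
Proof.
elim: k s => [|k IH] s; first by case: s.
apply: allpairs_uniq_dep => //; first exact: iota_uniq.
by move=> [i d] [i' d'] _ _ /= [-> ->].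
Qed.

Lemma iota_succ m n : iota m.+1 n = map S (iota m n).
Proof. by elim: n m => //= n IH m; rewrite IH. Qed.

Lemma sum_hockey k s : sumn [seq 'C(s - i + k, k) | i <- iota 0 s.+1] = 'C(s + k.+1, k.+1).
Proof.
elim: s => [|s IH].
  by rewrite /= sub0n !add0n addn0 !binn.
rewrite (_ : iota 0 s.+2 = 0 :: iota 1 s.+1) // iota_succ map_cons -map_comp.
rewrite (eq_map (_ : _ =1 fun i => 'C(s - i + k, k))); last by move=> i /=; rewrite subSS.
set L := map _ (iota 0 s.+1).
rewrite (_ : sumn (_ :: L) = 'C(s.+1 - 0 + k, k) + sumn L) // /L IH subn0.
have e1 : s.+1 + k.+1 = (s.+1 + k).+1 by rewrite addnS.
rewrite e1 binS !addSnnS; lia.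
Qed.

Lemma size_comps k s : size (comps k.+1 s) = 'C(s + k, k).
Proof.
elim: k s => [|k IH] s; rewrite size_allpairs_dep.
  rewrite addn0 bin0.
  rewrite (eq_map (_ : _ =1 fun x => nat_of_bool (s - x == 0))); last by move=> x /=; case: (s - x).
  rewrite sumn_count (@eq_in_count _ _ (pred1 s)).
    by rewrite count_uniq_mem ?iota_uniq // mem_iota; lia.
  by move=> x; rewrite mem_iota /=; lia.
rewrite (eq_map (_ : _ =1 fun x => 'C(s - x + k, k))); last by move=> x /=; rewrite IH.
by rewrite sum_hockey addnS.
Qed.

Lemma stepA a b c j a' b' c' j' : F a b c j (a + 1) = F a' b' c' j' (a + 1) -> a' <= a.
Proof. rewrite /F; repeat (case: ifP => ?; try lia). Qed.
Lemma stepB a b c j b' c' j' : F a b c j (a + b + 2) = F a b' c' j' (a + b + 2) -> b' <= b.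
Proof. rewrite /F; repeat (case: ifP => ?; try lia). Qed.
Lemma stepC a b c j c' j' : F a b c j (a + b + c + 2) = F a b c' j' (a + b + c + 2) -> c <= c'.
Proof. rewrite /F; repeat (case: ifP => ?; try lia). Qed.
Lemma stepJ a b c j j' : F a b c j (a + b + c + 3 + j) = F a b c j' (a + b + c + 3 + j) -> j' <= j.
Proof. rewrite /F; repeat (case: ifP => ?; try lia). Qed.

Lemma F_inj n a b c j l a' b' c' j' l' :
  n = a + b + c + j + l + 3 -> n = a' + b' + c' + j' + l' + 3 ->
  (forall i, i < n -> F a b c j i = F a' b' c' j' i) ->
  [/\ a = a', b = b', c = c', j = j' & l = l'].
Proof.
move=> e1 e2 h.
have ea : a = a'.
  apply/eqP; rewrite eqn_leq; apply/andP; split.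
    apply: (@stepA a' b' c' j' a b c j); rewrite h //; lia.
  apply: (@stepA a b c j a' b' c' j'); rewrite h //; lia.
subst a'.
have eb : b = b'.
  apply/eqP; rewrite eqn_leq; apply/andP; split.
    apply: (@stepB a b' c' j' b c j); rewrite h //; lia.
  apply: (@stepB a b c j b' c' j'); rewrite h //; lia.
subst b'.
have ec : c = c'.
  apply/eqP; rewrite eqn_leq; apply/andP; split.
    apply: (@stepC a b c j c' j'); rewrite h //; lia.
  apply: (@stepC a b c' j' c j); rewrite h //; lia.
subst c'.
have ej : j = j'.
  apply/eqP; rewrite eqn_leq; apply/andP; split.
    case: (posnP l') => l0; first lia.
    apply: (@stepJ a b c j' j); rewrite h //; lia.
  case: (posnP l) => l0; first lia.
  apply: (@stepJ a b c j j'); rewrite h //; lia.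
subst j'; split => //; lia.
Qed.

Definition dec n (c : seq nat) := mkseq (F (nth 0 c 0) (nth 0 c 1) (nth 0 c 2) (nth 0 c 3)) n.
Definition Lst n := map (cons 0) (bin n.-1) ++
  (if 3 <= n then map (dec n) (comps 5 (n - 3)) else [::]).
Definition Pats : seq (seq nat) := [:: [:: 0; 1; 1; 2]; [:: 0; 1; 2; 0]].

Lemma QE n x : avoiding_ascent_seq Pats n x =
  [&& size x == n, is_ascent_seq x, ~~ contains x [:: 0; 1; 1; 2] & ~~ contains x [:: 0; 1; 2; 0]].
Proof. by rewrite /avoiding_ascent_seq /= andbT. Qed.

Lemma comps5 s c : c \in comps 5 s -> exists a b d j l, c = [:: a; b; d; j; l] /\ a + b + d + j + l = s.
Proof.
rewrite mem_comps => /andP [].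
case: c => [|a [|b [|d [|j [|l [|? ?]]]]]] //= _ /eqP <-.
by exists a, b, d, j, l; split => //; lia.
Qed.

Lemma nth_le1 x i : all (fun v => v <= 1) x -> nth 0 x i <= 1.
Proof.
move/allP => h; case: (ltnP i (size x)) => hi; first by apply: h; exact: mem_nth.
by rewrite nth_default.
Qed.

Definition okx n x :=
  [&& size x == n, is_ascent_seq x, ~~ contains x [:: 0; 1; 1; 2] & ~~ contains x [:: 0; 1; 2; 0]].

Lemma fam_ok n a b c j l : n = a + b + c + j + l + 3 -> okx n (mkseq (F a b c j) n).
Proof.
move=> en; rewrite /okx; set x := mkseq _ n.
have sx : size x = n by rewrite size_mkseq.
have nx : forall i, i < n -> nth 0 x i = F a b c j i by move=> i hi; rewrite nth_mkseq.
apply/and4P; split.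
- by rewrite sx.
- apply/is_ascP; split; first by rewrite nx /F //; lia.
  move=> i; rewrite sx => /andP [i0 hi]; rewrite nx //.
  rewrite (@ascf_eq _ (F a b c j)); last by move=> t ti; apply: nx; lia.
  by rewrite ascfF; apply: F_asc.
- apply/negP => /c0112P [i1 [i2 [i3 [i4 [h1 h2 h3 h4 [k1 k2 k3]]]]]].
  rewrite sx in h4; rewrite !nx in k1 k2 k3; try lia.
  exact: (F_0112 h1 h2 h3 k1 k2 k3).
- apply/negP => /c0120P [i1 [i2 [i3 [i4 [h1 h2 h3 h4 [k1 k2 k3]]]]]].
  rewrite sx in h4; rewrite !nx in k1 k2 k3; try lia.
  exact: (F_0120 h1 h2 h3 k1 k2 k3).
Qed.

Lemma bin_ok n s : 0 < n -> s \in bin n.-1 -> okx n (0 :: s).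
Proof.
move=> n0; rewrite mem_bin => /andP [/eqP ss hs]; rewrite /okx; set x := 0 :: s.
have hx : all (fun v => v <= 1) x by rewrite /x /= hs.
have l1 := nth_le1 _ hx.
apply/and4P; split.
- rewrite /x /= ss; apply/eqP; lia.
- apply/is_ascP; split => // i _; have := l1 i; lia.
- apply/negP => /c0112P [i1 [i2 [i3 [i4 [h1 h2 h3 h4 [k1 k2 k3]]]]]].
  have := l1 i1; have := l1 i2; have := l1 i4; lia.
- apply/negP => /c0120P [i1 [i2 [i3 [i4 [h1 h2 h3 h4 [k1 k2 k3]]]]]].
  have := l1 i1; have := l1 i2; have := l1 i3; lia.
Qed.

Lemma memL n x : 0 < n -> avoiding_ascent_seq Pats n x = (x \in Lst n).
Proof.
move=> n0; rewrite QE; apply/idP/idP.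
  case/and4P => /eqP sx asc n12 n20.
  have [h|[a [b [c [j [l [e hx]]]]]]] := structure asc (fun h => negP n12 (proj2 (c0112P x) h))
    (fun h => negP n20 (proj2 (c0120P x) h)).
  + rewrite mem_cat; apply/orP; left.
    case: x sx asc h {n12 n20} => [|v s] /= sx; first lia.
    move=> /is_ascP [/= v0 _] /andP [_ hs]; subst v.
    have i0 : injective (cons 0) by move=> ? ? [].
    rewrite (mem_map i0).
    by rewrite mem_bin hs -sx eqxx.
  + rewrite mem_cat; apply/orP; right.
    have n3 : 3 <= n by lia.
    rewrite n3; apply/mapP; exists [:: a; b; c; j; l].
      by rewrite mem_comps /=; apply/eqP; lia.
    apply: (@eq_from_nth _ 0); first by rewrite size_mkseq.
    by move=> i hi; rewrite nth_mkseq -?sx // hx.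
rewrite mem_cat => /orP [/mapP [s hs ->]|].
  exact: bin_ok.
case: ifP => // n3 /mapP [c /comps5 [a [b [d [j [l [-> hs]]]]]] ->].
apply: (@fam_ok n a b d j l); move: n3 hs; clear; lia.
Qed.

Lemma sizeL n : size (Lst n) = 2 ^ n.-1 + 'C(n.+1, 4).
Proof.
rewrite /Lst size_cat size_map size_bin; congr (_ + _).
case: ifP => n3.
  by rewrite size_map size_comps; congr 'C(_, _); lia.
by rewrite bin_small //; lia.
Qed.

Lemma uniqL n : uniq (Lst n).
Proof.
rewrite /Lst cat_uniq map_inj_uniq ?uniq_bin; last by move=> ? ? [].
case: ifP => n3; last by rewrite /= ?andbT; case: (bin _).
apply/and3P; split => //.
  apply/hasPn => x /mapP [c /comps5 [a [b [d [j [l [-> hs]]]]]] ->].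
  apply/negP => /mapP [s]; rewrite mem_bin => /andP [_ hb] e.
  have : nth 0 (0 :: s) (a + b + 2) <= 1 by apply: nth_le1.
  rewrite -e /dec nth_mkseq /=; last lia.
  rewrite /F; repeat (case: ifP => ?; try lia).
rewrite map_inj_in_uniq ?uniq_comps //.
move=> c1 c2 /comps5 [a [b [d [j [l [-> h1]]]]]] /comps5 [a' [b' [d' [j' [l' [-> h2]]]]]] e.
have := @F_inj n a b d j l a' b' d' j' l' (ltac:(lia)) (ltac:(lia)).
case.
  move=> i hi; move: (congr1 (nth 0 ^~ i) e); rewrite /dec !nth_mkseq //.
by move=> -> -> -> -> ->.
Qed.

Lemma asc_lt x : is_ascent_seq x -> all (fun v => v < size x) x.
Proof.
move=> /is_ascP [h0 h]; apply/(all_nthP 0) => i hi.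
case: (posnP i) => [->|i0]; first by rewrite h0; lia.
have := h i (ltac:(lia)).
have : ascf (nth 0 x) i <= i.-1 by rewrite /ascf; apply: leq_trans (count_size _ _) _; rewrite size_iota.
lia.
Qed.

Theorem theorem3p6 (n : nat) : 1 <= n ->
  a_P [:: [:: 0; 1; 1; 2]; [:: 0; 1; 2; 0]] n = 2 ^ n.-1 + 'C(n.+1, 4).
Proof.
move=> n0; rewrite /a_P -sizeL.
apply: card_listP.
- exact: uniqL.
- by move=> x; rewrite -memL.
- by move=> x /and3P [].
- move=> x /and3P [/eqP <- /asc_lt h _]; exact: h.
Qed.
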